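(* For every $r\geq 4$ there is an antipodal partial cube of rank $r$ and minimum degree $4$. Moreover, there is an antipodal partial cube of rank $4$ and minimum degree $3$.
   Context: Hypercube $Q_n$: vertex set $\{+,-\}^n$, adjacency = differing in one coordinate. A partial cube is an isometric subgraph $G$ of $Q_n$, with $n$ minimal (isometric dimension); its edges split into $\Theta$-classes $E_f$ (edges flipping coordinate $f$). $G$ is antipodal if for every vertex $v$ of $G$ the vertex of $Q_n$ with all coordinates of $v$ flipped also belongs to $G$. The contraction $\pi_f(G)$ is obtained by contracting all edges of $E_f$; the rank of $G$ is the largest $r$ such that $Q_r$ can be obtained from $G$ by a sequence of contractions. *)

(* Defs.v *)
From mathcomp Require Import all_boot.
Set Implicit Arguments. Unset Strict Implicit. Unset Printing Implicit Defensive.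

(* Vertices of the hypercube Q_n : {+,-}^n, encoded as bool-valued functions
   on 'I_n (true = +, false = -). *)
Definition cube (n : nat) := {ffun 'I_n -> bool}.

(* Hamming distance = graph distance in Q_n. *)
Definition hamming n (x y : cube n) : nat := #|[set i | x i != y i]|.

Definition adj n (x y : cube n) : bool := hamming x y == 1.

(* A subgraph of Q_n is given by its vertex set V, with the induced
   adjacency (an isometric subgraph of Q_n is necessarily induced). *)

Definition walk_len n (V : {set cube n}) (x y : cube n) (k : nat) : Prop :=
  exists p : seq (cube n),
    [/\ path (@adj n) x p, all (fun z => z \in V) p, last x p = y & size p = k].

Definition gdist n (V : {set cube n}) (x y : cube n) (k : nat) : Prop :=
  walk_len V x y k /\ forall j, walk_len V x y j -> k <= j.

Definition isometric n (V : {set cube n}) : Prop :=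
  forall x y, x \in V -> y \in V -> gdist V x y (hamming x y).

Definition partial_cube n (V : {set cube n}) : Prop :=
  isometric V /\
  forall m, m < n ->
    ~ exists phi : cube n -> cube m,
        forall x y k, x \in V -> y \in V -> gdist V x y k ->
          hamming (phi x) (phi y) = k.

Definition antipodal n (V : {set cube n}) : Prop :=
  forall v, v \in V -> [ffun i => ~~ v i] \in V.

Definition deg n (V : {set cube n}) (v : cube n) : nat :=
  #|[set u in V | adj v u]|.

Definition min_degree n (V : {set cube n}) (d : nat) : Prop :=
  (exists2 v, v \in V & deg V v = d) /\
  forall v, v \in V -> d <= deg V v.

(* Contraction pi_f(G) of the Theta-class E_f (edges flipping coordinate f):
   the resulting partial cube lives in Q_{n-1}, its vertices being the
   vertices of G with coordinate f deleted. *)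
Definition contr n (f : 'I_n.+1) (V : {set cube n.+1}) : {set cube n} :=
  [set ([ffun i => x (lift f i)] : cube n) | x : cube n.+1 in V].

Inductive contr_seq : forall n, {set cube n} -> forall m, {set cube m} -> Prop :=
| cs_refl n (V : {set cube n}) : contr_seq V V
| cs_step n (V : {set cube n.+1}) (f : 'I_n.+1) m (W : {set cube m}) :
    contr_seq (contr f V) W -> contr_seq V W.

Definition iso_cube m (W : {set cube m}) (r : nat) : Prop :=
  exists g : cube r -> cube m,
    [/\ injective g, forall z, g z \in W, forall w, w \in W -> exists z, g z = w
      & forall z1 z2, adj (g z1) (g z2) = adj z1 z2].

Definition has_rank n (V : {set cube n}) (r : nat) : Prop :=
  (exists m (W : {set cube m}), contr_seq V W /\ iso_cube W r) /\
  forall m (W : {set cube m}) r', contr_seq V W -> iso_cube W r' -> r' <= r.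

(* Main.v *)
Require Import Defs.
From mathcomp Require Import all_boot.
From mathcomp Require Import zify.

Set Implicit Arguments. Unset Strict Implicit. Unset Printing Implicit Defensive.

Definition flip n (x : cube n) (i : 'I_n) : cube n :=
  [ffun j => if j == i then ~~ x j else x j].
Definition constU n (u : nat) (x : cube n) :=
  [forall i : 'I_n, forall j : 'I_n, ((i < u) && (j < u)) ==> (x i == x j)].
Definition constA n (x : cube n) := [forall i : 'I_n, forall j : 'I_n, x i == x j].
Definition VV n u : {set cube n} := [set x : cube n | ~~ constU u x || constA x].

Lemma flipE n (x : cube n) i j : flip x i j = if j == i then ~~ x j else x j.
Proof. by rewrite ffunE. Qed.

Lemma hamming_flip n (x y : cube n) i :
  x i != y i -> hamming (flip x i) y = (hamming x y).-1.
Proof.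
move=> hi; rewrite /hamming.
have -> : [set j | flip x i j != y j] = [set j | x j != y j] :\ i.
  apply/setP => j; rewrite !inE flipE; case: (eqVneq j i) => [->|hji] //=.
  by move: hi; case: (x i); case: (y i).
by rewrite [in RHS](cardsD1 i) inE hi.
Qed.

Lemma adj_flip n (x : cube n) i : adj x (flip x i).
Proof.
rewrite /adj /hamming.
have -> : [set j | x j != flip x i j] = [set i].
  apply/setP => j; rewrite !inE flipE; case: (eqVneq j i) => [->|hji] /=.
    by case: (x i).
  by rewrite eqxx.
by rewrite cards1.
Qed.

Lemma adjP n (x w : cube n) : adj x w -> exists i, w = flip x i.
Proof.
rewrite /adj /hamming => /cards1P [i Hi]; exists i.
apply/ffunP => j; rewrite flipE.
have := congr1 (fun A : {set 'I_n} => j \in A) Hi; rewrite !inE.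
case: (eqVneq j i) => [->|hji] /=.
  by case: (x i); case: (w i).
by move/negbFE/eqP.
Qed.

Lemma ham_tri n (x y z : cube n) : hamming x z <= hamming x y + hamming y z.
Proof.
rewrite /hamming; apply: leq_trans (leq_card_setU _ _).
apply: subset_leq_card; apply/subsetP => j; rewrite !inE.
by case: (x j); case: (y j); case: (z j).
Qed.

Lemma ham0 n (x y : cube n) : hamming x y = 0 -> x = y.
Proof.
rewrite /hamming => /eqP; rewrite cards_eq0 => /eqP H.
apply/ffunP => j; have := congr1 (fun A : {set 'I_n} => j \in A) H; rewrite !inE.
by move/negbFE/eqP.
Qed.

Lemma walk_lb n (V : {set cube n}) x y k : walk_len V x y k -> hamming x y <= k.
Proof.
case=> p [hp _ hl hs]; subst k y.
elim: p x hp => [|z p IH] x /=.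
  move=> _; rewrite /hamming leqn0 cards_eq0; apply/eqP/setP => j.
  by rewrite !inE eqxx.
case/andP => hxz hp.
apply: leq_trans (ham_tri x z _) _.
by move: hxz; rewrite /adj => /eqP ->; rewrite add1n ltnS IH.
Qed.

Lemma ne_exists n (x y : cube n) : x != y -> exists i, x i != y i.
Proof.
move=> hne; case: (boolP [exists i, x i != y i]) => [/existsP //|/existsPn H].
by case/eqP: hne; apply/ffunP => j; move: (H j); move/negPn/eqP.
Qed.

Lemma notinV n u (x : cube n) : x \notin VV n u -> constU u x && ~~ constA x.
Proof. by rewrite inE negb_or negbK. Qed.

Lemma bad_lt n u (x : cube n) i :
  ~~ constU u x -> flip x i \notin VV n u -> i < u.
Proof.
move=> hx /notinV /andP [hc _].
case: (ltnP i u) => // hiu; case/negP: hx.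
apply/forallP => a; apply/forallP => b; apply/implyP => /andP [ha hb].
move/forallP: hc => /(_ a) /forallP /(_ b) /implyP /(_ (introT andP (conj ha hb))).
rewrite !flipE.
have -> : (a == i) = false by apply/negbTE; apply/eqP => E; subst; lia.
by have -> : (b == i) = false by apply/negbTE; apply/eqP => E; subst; lia.
Qed.

Lemma pick3nat (a b : nat) : exists k, [/\ k < 3, k != a & k != b].
Proof.
case: (eqVneq a 0) => ha; case: (eqVneq b 0) => hb.
- by exists 1; split; lia.
- case: (eqVneq b 1) => hb1; first by exists 2; split; lia.
  by exists 1; split; lia.
- case: (eqVneq a 1) => ha1; first by exists 2; split; lia.
  by exists 1; split; lia.
- by exists 0; split; lia.
Qed.

Lemma pick3 n u (i j : 'I_n) : 3 <= u -> u <= n ->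
  exists k : 'I_n, [/\ k < u, k != i & k != j].
Proof.
move=> h3 hn.
have [k [k3 ki kj]] := pick3nat i j.
have hk : k < n by lia.
exists (Ordinal hk); split.
- by rewrite /=; lia.
- by apply/eqP => /(congr1 val) /= E; rewrite E eqxx in ki.
- by apply/eqP => /(congr1 val) /= E; rewrite E eqxx in kj.
Qed.

Lemma bad_uniq n u (x : cube n) i j : 3 <= u -> u <= n ->
  ~~ constU u x -> flip x i \notin VV n u -> flip x j \notin VV n u -> i = j.
Proof.
move=> h3 hn hx hi hj.
have iu := bad_lt hx hi; have ju := bad_lt hx hj.
apply/eqP; apply/negPn/negP => hij.
have [k [ku ki kj]] := pick3 i j h3 hn.
move: hi hj => /notinV /andP [ci _] /notinV /andP [cj _].
move/forallP: ci => /(_ i) /forallP /(_ k) /implyP; rewrite iu ku => /(_ isT).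
move/forallP: cj => /(_ i) /forallP /(_ k) /implyP; rewrite iu ku => /(_ isT).
rewrite !flipE eqxx (negbTE hij) (negbTE ki) (negbTE kj) => /eqP A /eqP B.
by move: A; rewrite -B; case: (x i).
Qed.

Lemma constA_flip n u (x : cube n) i : 2 <= u -> u <= n -> constA x ->
  (flip x i \in VV n u) = (i < u).
Proof.
move=> h2 hn hA.
have xe : forall a b, x a = x b by move=> a b; move/forallP: hA => /(_ a) /forallP /(_ b) /eqP.
case: (ltnP i u) => hiu.
- rewrite inE; apply/orP; left; apply/negP => /forallP hc.
  pose k := if nat_of_ord i == 0 then 1 else 0.
  have hk : k < n by rewrite /k; case: ifP; lia.
  have := hc i; move/forallP => /(_ (Ordinal hk)) /implyP.
  have -> : (i < u) && (Ordinal hk < u) by rewrite hiu /= /k; case: ifP; lia.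
  move=> /(_ isT); rewrite !flipE eqxx.
  have -> : (Ordinal hk == i) = false.
    by apply/negbTE/eqP => /(congr1 val) /=; rewrite /k; case: ifP; lia.
  by rewrite (xe (Ordinal hk) i); case: (x i).
- apply/negbTE; rewrite inE negb_or negbK; apply/andP; split.
  + apply/forallP => a; apply/forallP => b; apply/implyP => /andP [ha hb].
    rewrite !flipE.
    have -> : (a == i) = false by apply/negbTE; apply/eqP => E; subst; lia.
    have -> : (b == i) = false by apply/negbTE; apply/eqP => E; subst; lia.
    by rewrite (xe a b).
  + apply/negP => /forallP /(_ i) /forallP.
    have hk : 0 < n by lia.
    move=> /(_ (Ordinal hk)); rewrite !flipE eqxx.
    have -> : (Ordinal hk == i) = false.
      by apply/negbTE/eqP => /(congr1 val) /=; lia.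
    by rewrite (xe (Ordinal hk) i); case: (x i).
Qed.

Lemma key n u (x y : cube n) : 3 <= u -> u <= n ->
  x \in VV n u -> y \in VV n u -> x != y ->
  exists i, (x i != y i) && (flip x i \in VV n u).
Proof.
move=> h3 hn hx hy hne.
have h0 : 0 < n by lia.
case: (boolP (constA x)) => hA.
- have xe : forall a b, x a = x b by move=> a b; move/forallP: hA => /(_ a) /forallP /(_ b) /eqP.
  case: (boolP [exists i : 'I_n, (i < u) && (x i != y i)]).
    move/existsP => [i /andP [iu ne]]; exists i; rewrite ne /=.
    by rewrite constA_flip //; lia.
  move/existsPn => H.
  have ye : forall a : 'I_n, a < u -> y a = x a.
    by move=> a au; move: (H a); rewrite au /= => /negPn /eqP.
  have yU : constU u y.
    apply/forallP => a; apply/forallP => b; apply/implyP => /andP [ha hb].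
    by rewrite ye // ye // (xe a b).
  move: hy; rewrite inE yU /= => yA.
  case/eqP: hne; apply/ffunP => j.
  have i0u : Ordinal h0 < u by rewrite /=; lia.
  move/forallP: yA => /(_ j) /forallP /(_ (Ordinal h0)) /eqP ->.
  by rewrite ye // (xe j).
- have hU : ~~ constU u x by move: hx; rewrite inE (negbTE hA) orbF.
  case: (boolP [exists i, (x i != y i) && (flip x i \in VV n u)]) => [/existsP //|/existsPn H].
  have [i0 hi0] := ne_exists hne.
  have b0 : flip x i0 \notin VV n u by move: (H i0); rewrite hi0.
  have : y = flip x i0.
    apply/ffunP => j; rewrite flipE; case: eqP => [->|/eqP hj].
      by move: hi0; case: (x i0); case: (y i0).
    apply/eqP; rewrite eq_sym; apply/negPn/negP => hxj.
    have bj : flip x j \notin VV n u by move: (H j); rewrite hxj.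
    by move: hj; rewrite (bad_uniq h3 hn hU bj b0) eqxx.
  by move=> E; move: b0; rewrite -E hy.
Qed.

Lemma isometricVV n u : 3 <= u -> u <= n -> isometric (VV n u).
Proof.
move=> h3 hn x y hx hy; split; last by move=> j; apply: walk_lb.
suff: forall d x, x \in VV n u -> hamming x y = d -> walk_len (VV n u) x y d.
  by move=> H; apply: (H _ x hx erefl).
move=> {hx} d; elim: d => [|d IH] x0 hx0 hd.
  by rewrite (ham0 hd); exists [::].
have hne : x0 != y.
  apply/eqP => E; move: hd; rewrite E /hamming.
  have -> : [set j | y j != y j] = set0 by apply/setP => j; rewrite !inE eqxx.
  by rewrite cards0.
have [i /andP [hi hf]] := key h3 hn hx0 hy hne.
have [p [hp hall hl hs]] := IH _ hf ltac:(by rewrite hamming_flip // hd).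
exists (flip x0 i :: p); split => //=.
- by rewrite adj_flip.
- by rewrite hf.
- by rewrite hs.
Qed.

Lemma card_cube n : #|[set: cube n]| = 2 ^ n.
Proof. by rewrite cardsT /cube card_ffun card_bool card_ord. Qed.

Lemma ham_le n (x y : cube n) : hamming x y <= n.
Proof. by rewrite /hamming; apply: leq_trans (max_card _) _; rewrite card_ord. Qed.

Definition cst n (b : bool) : cube n := [ffun => b].

Lemma cst_in n u b : cst n b \in VV n u.
Proof. by rewrite inE; apply/orP; right; apply/forallP => a; apply/forallP => c; rewrite !ffunE. Qed.

Lemma ham_cst n : hamming (cst n false) (cst n true) = n.
Proof.
rewrite /hamming; have -> : [set j | cst n false j != cst n true j] = setT.
  by apply/setP => j; rewrite !inE !ffunE.
by rewrite cardsT card_ord.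
Qed.

Lemma partialVV n u : 3 <= u -> u <= n -> partial_cube (VV n u).
Proof.
move=> h3 hn; split; first exact: isometricVV.
move=> m hm [phi Hphi].
have := Hphi _ _ _ (cst_in n u false) (cst_in n u true)
   (isometricVV h3 hn (cst_in n u false) (cst_in n u true)).
rewrite ham_cst => E.
by have := ham_le (phi (cst n false)) (phi (cst n true)); rewrite E; lia.
Qed.

Lemma antipodalVV n u : antipodal (VV n u).
Proof.
move=> v; rewrite !inE.
have -> : constU u [ffun i => ~~ v i] = constU u v.
  apply: eq_forallb => a; apply: eq_forallb => b; rewrite !ffunE.
  by case: (v a); case: (v b).
have -> // : constA [ffun i => ~~ v i] = constA v.
apply: eq_forallb => a; apply: eq_forallb => b; rewrite !ffunE.
by case: (v a); case: (v b).
Qed.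

Lemma flip_inj n (v : cube n) : injective (flip v).
Proof.
move=> i j E; have := congr1 (fun w : cube n => w i) E; rewrite !flipE eqxx.
case: eqP => // _; by case: (v i).
Qed.

Lemma deg_eq n (V : {set cube n}) v : deg V v = #|[set i | flip v i \in V]|.
Proof.
rewrite /deg.
have -> : [set u in V | adj v u] = flip v @: [set i | flip v i \in V].
  apply/setP => w; rewrite !inE; apply/andP/imsetP.
    by case=> hw /adjP [i Ei]; subst; exists i; rewrite ?inE.
  by case=> i; rewrite inE => hi ->; rewrite hi adj_flip.
by rewrite card_imset //; apply: flip_inj.
Qed.

Lemma card_ltu n u : u <= n -> #|[set i : 'I_n | i < u]| = u.
Proof.
move=> hn.
have -> : [set i : 'I_n | i < u] = widen_ord hn @: [set: 'I_u].
  apply/setP => i; rewrite inE; apply/idP/imsetP.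
    by move=> hi; exists (Ordinal hi) => //; apply: val_inj.
  by case=> k _ ->; rewrite /= ltn_ord.
rewrite card_imset ?cardsT ?card_ord //.
by move=> a b /(congr1 val) /= E; apply: val_inj.
Qed.

Lemma good_constA n u (v : cube n) : 3 <= u -> u <= n -> constA v ->
  [set i | flip v i \in VV n u] = [set i : 'I_n | i < u].
Proof.
move=> h3 hn hA; apply/setP => i; have E := constA_flip i (_ : 2 <= u) hn hA.
rewrite [RHS]inE -E; last lia.
by rewrite inE.
Qed.

Lemma mindegVV n u : 3 <= u -> u < n -> min_degree (VV n u) u.
Proof.
move=> h3 hn; have hn' : u <= n by lia.
split.
  exists (cst n false); first exact: cst_in.
  rewrite deg_eq good_constA ?card_ltu //.
  by apply/forallP => a; apply/forallP => b; rewrite !ffunE.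
move=> v hv; rewrite deg_eq.
case: (boolP (constA v)) => hA; first by rewrite good_constA ?card_ltu.
have hU : ~~ constU u v by move: hv; rewrite inE (negbTE hA) orbF.
have hb : #|~: [set i | flip v i \in VV n u]| <= 1.
  apply/card_le1_eqP => a b; rewrite !inE => ha hb.
  by apply: (bad_uniq h3 hn' hU); rewrite inE.
have := cardsC [set i | flip v i \in VV n u]; rewrite card_ord.
lia.
Qed.

Lemma contr_card n (V : {set cube n}) m (W : {set cube m}) :
  contr_seq V W -> #|W| <= #|V|.
Proof.
elim => // n0 V0 f m0 W0 _ IH.
apply: leq_trans IH _; rewrite /contr; exact: leq_imset_card.
Qed.

Lemma iso_card m (W : {set cube m}) r : iso_cube W r -> #|W| = 2 ^ r.
Proof.
case=> g [gi gW Wg _].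
have -> : W = g @: [set: cube r].
  apply/setP => w; apply/idP/imsetP.
    by move=> /Wg [z <-]; exists z.
  by case=> z _ ->.
by rewrite card_imset // card_cube.
Qed.

Lemma rankVV m u : 3 <= u -> u <= m -> has_rank (VV m.+1 u) m.
Proof.
move=> h3 hm; split.
  exists m, (contr ord0 (VV m.+1 u)); split; first by apply: cs_step; apply: cs_refl.
  exists id; split; [by [] | | by move=> w _; exists w | by []].
  move=> z.
  have h0 : 0 < m by lia.
  pose i0 := Ordinal h0.
  pose x : cube m.+1 := [ffun j => if unlift ord0 j is Some i then z i else ~~ z i0].
  apply/imsetP; exists x.
    rewrite inE; apply/orP; left; apply/negP => /forallP /(_ ord0) /forallP /(_ (lift ord0 i0)).
    rewrite /= /bump /=.
    have -> : (0 < u) && (1 < u) by lia.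
    rewrite /= !ffunE unlift_none liftK.
    by case: (z i0).
  by apply/ffunP => i; rewrite !ffunE liftK.
move=> m' W r' hc hi.
have h1 := contr_card hc; rewrite (iso_card hi) in h1.
have h2 : #|VV m.+1 u| < 2 ^ m.+1.
  rewrite -card_cube; apply: proper_card; rewrite properT.
  apply/eqP => E.
  pose x0 : cube m.+1 := [ffun j => j == ord_max].
  have : x0 \in VV m.+1 u by rewrite E inE.
  rewrite inE => /orP [/negP []|hA'].
    apply/forallP => a; apply/forallP => b; apply/implyP => /andP [ha hb].
    rewrite !ffunE.
    have -> : (a == ord_max) = false by apply/negbTE/eqP => /(congr1 val) /=; lia.
    by have -> : (b == ord_max) = false by apply/negbTE/eqP => /(congr1 val) /=; lia.
  move/forallP: hA' => /(_ ord0) /forallP /(_ ord_max); rewrite !ffunE eqxx.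
  have -> : (ord0 == ord_max :> 'I_m.+1) = false by apply/negbTE/eqP => /(congr1 val) /=; lia.
  by [].
have := leq_ltn_trans h1 h2; rewrite ltn_exp2l // ltnS.
Qed.

Theorem mainTheorem16 :
  (forall r : nat, 4 <= r ->
     exists n (V : {set cube n}),
       [/\ partial_cube V, antipodal V, has_rank V r & min_degree V 4]) /\
  (exists n (V : {set cube n}),
       [/\ partial_cube V, antipodal V, has_rank V 4 & min_degree V 3]).
Proof.
split.
  move=> r hr; exists r.+1, (VV r.+1 4); split.
  - apply: partialVV => //; lia.
  - exact: antipodalVV.
  - exact: rankVV.
  - apply: mindegVV => //; lia.
exists 5, (VV 5 3); split.
- exact: partialVV.
- exact: antipodalVV.
- exact: rankVV.
- exact: mindegVV.
Qed.
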